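(* Let $G$ be a factor graph with known factors $\boldsymbol F=\{f_1,\dots,f_m\}$ and unknown factors $\boldsymbol F'=\{f'_1,\dots,f'_z\}$, and suppose that for every unknown factor $f_i\in\boldsymbol F'$ there is at least one known factor $f_j\in\boldsymbol F$ that is possibly identical to $f_i$ (i.e. $f_i\approx f_j$). Then the LIFG algorithm is able to replace all unknown potentials in $G$ by known potentials, i.e. (for a suitable choice of the threshold $\theta\in[0,1]$) every unknown factor is assigned the colour and the potential mappings of at least one known factor.
   Context: A factor graph (FG) $G=(\boldsymbol V,\boldsymbol E)$ is an undirected bipartite graph with node set $\boldsymbol V=\boldsymbol R\cup\boldsymbol F$, where $\boldsymbol R$ is a set of random variables (each $R$ with a finite range $\mathrm{range}(R)$) and $\boldsymbol F$ a set of factors; each factor $f_j$ defines a function $\phi_j(\mathcal R_j)$ mapping assignments of a sequence $\mathcal R_j$ of random variables to positive reals (potentials), and $R$ is adjacent to $f_j$ iff $R$ occurs in $\mathcal R_j$. A factor is \emph{unknown} if its argument list is known but its potential values are unknown; otherwise it is known. Evidence is a set of observed events $R=r$. $\mathrm{Ne}_G(v)$ denotes the set of neighbours of node $v$. The 2-step neighbourhood of a factor $f$ is $\mathrm{Ne}^2_G(f)=\{R\mid R\in\mathrm{Ne}_G(f)\}\cup\{f'\mid\exists R: R\in\mathrm{Ne}_G(f)\wedge f'\in\mathrm{Ne}_G(R)\}$, and $G[V']$ is the induced subgraph. For factors $f_i,f_j$, $G[\mathrm{Ne}^2_G(f_i)]$ and $G[\mathrm{Ne}^2_G(f_j)]$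 are \emph{indistinguishable} if $|\mathrm{Ne}_G(f_i)|=|\mathrm{Ne}_G(f_j)|$ and there is a bijection $\tau:\mathrm{Ne}_G(f_i)\to\mathrm{Ne}_G(f_j)$ such that for each $R_k$, $R_k$ and $\tau(R_k)$ have identical observed evidence, identical ranges, and $|\mathrm{Ne}_G(R_k)|=|\mathrm{Ne}_G(\tau(R_k))|$. Factors $f_i,f_j$ are \emph{possibly identical}, $f_i\approx f_j$, if their induced 2-step neighbourhoods are indistinguishable and at least one of them is unknown or both encode identical potential mappings. LIFG algorithm (input: FG $G$ with known factors $\boldsymbol F$, unknown factors $\boldsymbol F'$, evidence, threshold $\theta\in[0,1]$): (1) colour each known factor by its potentials; (2) give each unknown factor a unique colour; (3) for each unknown $f_i$, set $C_{f_i}=\emptyset$ and for every factor $f_j\ne f_i$ with $f_i\approx f_j$: if $f_j$ is unknown, give $f_j$ the colour of $f_i$, otherwise add $f_j$ to $C_{f_i}$; (4) for each $C_{f_i}$, let $C^{\ell}_{f_i}$ be a maximal subset of $C_{f_i}$ whose elements are pairwise possibly identical; if $|C^{\ell}_{f_i}|/|C_{f_i}|\ge\theta$, give all $f_j\in C^{\ell}_{f_i}$ the colour of $f_i$ and assign to $f_i$ the potentials of the factors in $C^{\ell}_{f_i}$; (5) run the Advanced Colour Passing (colour-passing lifting) algorithm on the resulting graph and evidence to obtain the lifted representation. *)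

(* Defs.v *)
From HB Require Import structures.
From mathcomp Require Import all_boot all_order all_algebra.
From mathcomp Require Import boolp reals.
Set Implicit Arguments. Unset Strict Implicit. Unset Printing Implicit Defensive.
Import Order.TTheory GRing.Theory Num.Theory.
Local Open Scope ring_scope.

(* A factor graph with random variables of type V and factors of type F.
   - fg_args f : the argument sequence R_j of factor f (R adjacent to f iff R occurs in it)
   - fg_range R : |range(R)|, the range of R being {0, ..., fg_range R - 1}
   - fg_ev R : Some r iff the event R = r is observed (evidence), None otherwise
   - fg_pot f : Some phi if f is known with potential mapping phi (on assignments,
                i.e. value sequences for fg_args f), None if f is unknown. *)
Record factor_graph (R : realType) (V F : finType) := FGraph {
  fg_args : F -> seq V;
  fg_range : V -> nat;
  fg_ev : V -> option nat;
  fg_pot : F -> option (seq nat -> R)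
}.

Section FG.
Context (R : realType) (V F : finType) (G : factor_graph R V F).

Definition knownb (f : F) : bool := if fg_pot G f is Some _ then true else false.
Definition unknownb (f : F) : bool := ~~ knownb f.

Definition NeF (f : F) : {set V} := [set v | v \in fg_args G f].
Definition NeV (v : V) : {set F} := [set f | v \in fg_args G f].

Definition valid_assign (f : F) (a : seq nat) : bool :=
  all2 (fun x v => x < fg_range G v)%N a (fg_args G f).

Definition ident_pot (f g : F) (phi psi : seq nat -> R) : Prop :=
  forall a, (valid_assign f a = valid_assign g a) /\ (valid_assign f a -> phi a = psi a).

(* induced 2-step neighbourhoods of fi and fj are indistinguishable *)
Definition indist (fi fj : F) : Prop :=
  #|NeF fi| = #|NeF fj| /\
  exists tau : V -> V,
    {in NeF fi &, injective tau} /\ tau @: NeF fi = NeF fj /\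
    forall v, v \in NeF fi ->
      [/\ fg_ev G (tau v) = fg_ev G v, fg_range G (tau v) = fg_range G v
        & #|NeV (tau v)| = #|NeV v| ].

Definition poss_id (fi fj : F) : Prop :=
  indist fi fj /\
  (fg_pot G fi = None \/ fg_pot G fj = None \/
   exists phi psi, [/\ fg_pot G fi = Some phi, fg_pot G fj = Some psi & ident_pot fi fj phi psi]).

(* Steps (1)-(2): admissible initial colourings (colours are natural numbers). *)
Definition init_colouring (col : F -> nat) : Prop :=
  (forall f g phi psi, fg_pot G f = Some phi -> fg_pot G g = Some psi ->
     (col f = col g <-> ident_pot f g phi psi)) /\
  (forall f g, unknownb f -> g != f -> col g <> col f).

(* Step (3): recolouring of unknown factors, processing the unknown factors in order s. *)
Definition step3 (col : F -> nat) (fi : F) : F -> nat :=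
  fun g => if [&& g != fi, unknownb g & `[< poss_id fi g >]] then col fi else col g.

Definition Cset (fi : F) : {set F} :=
  [set g | [&& g != fi, knownb g & `[< poss_id fi g >]]].

Definition pairwise_pi (S : {set F}) : Prop :=
  forall g h, g \in S -> h \in S -> g != h -> poss_id g h.
Definition maximal_pi (C S : {set F}) : Prop :=
  [/\ S \subset C, pairwise_pi S &
      forall S' : {set F}, S \subset S' -> S' \subset C -> pairwise_pi S' -> S' = S].

(* Step (4) for one unknown factor fi, with chosen maximal subset Cl fi of C_{fi};
   the state is (colouring, current potential assignment). *)
Definition step4 (theta : R) (Cl : F -> {set F})
    (st : (F -> nat) * (F -> option (seq nat -> R))) (fi : F) :=
  let: (col, np) := st in
  if (0 < #|Cset fi|)%N && (theta <= #|Cl fi|%:R / #|Cset fi|%:R) then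
    (fun g => if g \in Cl fi then col fi else col g,
     fun g => if g == fi then
                (if [pick h in Cl fi] is Some h then fg_pot G h else np g)
              else np g)
  else st.

Definition LIFG (theta : R) (col0 : F -> nat) (s : seq F) (Cl : F -> {set F}) :=
  foldl (step4 theta Cl) (foldl step3 col0 s, fg_pot G) s.

End FG.

(* Main.v *)
Require Import Defs.
From HB Require Import structures.
From mathcomp Require Import all_boot all_order all_algebra.
From mathcomp Require Import boolp reals.
Import Order.TTheory GRing.Theory Num.Theory.
Local Open Scope ring_scope.
Set Implicit Arguments. Unset Strict Implicit.

Lemma indist_refl (R : realType) (V F : finType) (G : factor_graph R V F) f :
  indist G f f.
Proof.
split=> //; exists id; split; first by move=> x y _ _.
by split; [apply: imset_id | by move=> v _; split].
Qed.

Lemma indist_trans (R : realType) (V F : finType) (G : factor_graph R V F) f g h :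
  indist G f g -> indist G g h -> indist G f h.
Proof.
move=> [c1 [t1 [i1 [e1 p1]]]] [c2 [t2 [i2 [e2 p2]]]].
split; first by rewrite c1.
have m1 v : v \in NeF G f -> t1 v \in NeF G g.
  by move=> vf; rewrite -e1; apply: imset_f.
exists (t2 \o t1); split.
  move=> x y xf yf /= E; apply: i1 => //; apply: i2 => //; exact: m1.
split; first by rewrite imset_comp e1 e2.
move=> v vf /=; have [a b c] := p1 v vf; have [a' b' c'] := p2 (t1 v) (m1 v vf).
by split; [rewrite a' a | rewrite b' b | rewrite c' c].
Qed.

Lemma indist_sym (R : realType) (V F : finType) (G : factor_graph R V F) f g :
  indist G f g -> indist G g f.
Proof.
move=> [c1 [t [i [e p]]]].
pose sg w := odflt w [pick v in NeF G f | t v == w].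
have spec w : w \in NeF G g -> sg w \in NeF G f /\ t (sg w) = w.
  rewrite -e => /imsetP [v vf ->]; rewrite /sg.
  case: pickP => [v' /andP [v'f /eqP ->] | /(_ v)]; first by [].
  by rewrite vf eqxx.
have m1 v : v \in NeF G f -> t v \in NeF G g.
  by move=> vf; rewrite -e; apply: imset_f.
split; first by rewrite c1.
exists sg; split.
  move=> x y xg yg E; have [_ <-] := spec x xg; have [_ <-] := spec y yg.
  by rewrite E.
split.
  apply/eqP; rewrite eqEsubset; apply/andP; split.
    by apply/subsetP => x /imsetP [w wg ->]; have [] := spec w wg.
  apply/subsetP => v vf; apply/imsetP; exists (t v); first exact: m1.
  have [s1 s2] := spec (t v) (m1 v vf); by apply: i.
move=> w wg; have [s1 s2] := spec w wg; have [a b c] := p (sg w) s1.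
by rewrite s2 in a b c; split.
Qed.

Lemma unknownbE (R : realType) (V F : finType) (G : factor_graph R V F) f :
  unknownb G f = (fg_pot G f == None).
Proof. by rewrite /unknownb /knownb; case: fg_pot. Qed.

Lemma knownbE (R : realType) (V F : finType) (G : factor_graph R V F) f :
  knownb G f = (fg_pot G f != None).
Proof. by rewrite /knownb; case: fg_pot. Qed.

Lemma step3_unk (R : realType) (V F : finType) (G : factor_graph R V F) col fk g :
  fg_pot G fk = None -> fg_pot G g = None ->
  step3 G col fk g = if `[< indist G fk g >] then col fk else col g.
Proof.
move=> hk hg; rewrite /step3 unknownbE hg eqxx /=.
have -> : `[< poss_id G fk g >] = `[< indist G fk g >].
  by apply/asboolP/asboolP => [[]//|H]; split => //; left.
case: eqP => [->|_] /=; last by [].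
by case: ifP.
Qed.

Lemma step3_fold (R : realType) (V F : finType) (G : factor_graph R V F) s :
  forall col done,
  (forall f, f \in done ++ s -> fg_pot G f = None) ->
  (forall p x, p \in done -> fg_pot G x = None -> indist G p x -> col x = col p) ->
  (forall p x, p \in done ++ s -> fg_pot G x = None -> indist G p x ->
     foldl (step3 G) col s x = foldl (step3 G) col s p).
Proof.
elim: s => [|fk s IH] col done Hu Hinv /=.
  by rewrite cats0; apply: Hinv.
rewrite -cat_rcons; apply: IH; first by rewrite cat_rcons.
have hk : fg_pot G fk = None by apply: Hu; rewrite mem_cat inE eqxx orbT.
move=> p x; rewrite mem_rcons inE => /orP [/eqP ->|pd] hx E.
  by rewrite !step3_unk // (asboolT E) (asboolT (indist_refl G fk)).
have hp : fg_pot G p = None by apply: Hu; rewrite mem_cat pd.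
rewrite !step3_unk //.
case: (asboolP (indist G fk p)) => Hkp.
  by rewrite (asboolT (indist_trans Hkp E)).
case: (asboolP (indist G fk x)) => Hkx; last exact: Hinv.
by exfalso; apply: Hkp; apply: indist_trans Hkx (indist_sym E).
Qed.

Lemma Cl_prop (R : realType) (V F : finType) (G : factor_graph R V F) Cl fi h :
  maximal_pi G (Cset G fi) Cl -> h \in Cl -> fg_pot G h <> None /\ indist G fi h.
Proof.
move=> [sub _ _] /(subsetP sub); rewrite inE => /and3P [_ kh /asboolP [I _]].
by split => //; apply/eqP; rewrite -knownbE.
Qed.

Lemma Cl_ne (R : realType) (V F : finType) (G : factor_graph R V F) Cl fi :
  fg_pot G fi = None -> maximal_pi G (Cset G fi) Cl ->
  (exists fj, fg_pot G fj <> None /\ poss_id G fi fj) ->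
  (0 < #|Cset G fi|)%N /\ exists h, h \in Cl.
Proof.
move=> hi [sub pw mx] [fj [kj pj]].
have fjC : fj \in Cset G fi.
  rewrite inE knownbE; apply/and3P; split; last by apply/asboolP.
    by apply/eqP => E; apply: kj; rewrite E.
  by apply/eqP.
split; first by apply/card_gt0P; exists fj.
case: (set_0Vmem Cl) => [E|[x xC]]; last by exists x.
have := mx [set fj]; rewrite E sub0set sub1set fjC => /(_ isT isT).
have P : pairwise_pi G [set fj].
  by move=> g h; rewrite !inE => /eqP -> /eqP ->; rewrite eqxx.
move=> /(_ P) /setP /(_ fj); rewrite !inE eqxx => //.
Qed.

Definition inv4 (R : realType) (V F : finType) (G : factor_graph R V F)
  (Cl : F -> {set F}) (col1 : F -> nat)
  (st : (F -> nat) * (F -> option (seq nat -> R))) (done : seq F) : Prop :=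
  [/\ (forall x, fg_pot G x = None -> st.1 x = col1 x),
      (forall p h, p \in done -> h \in Cl p -> st.1 h = col1 p),
      (forall p, p \in done -> exists2 h, h \in Cl p & st.2 p = fg_pot G h)
    & (forall p, p \in done -> fg_pot G p = None)].

Lemma step4_fold (R : realType) (V F : finType) (G : factor_graph R V F)
  (Cl : F -> {set F}) (col1 : F -> nat) :
  (forall fi, fg_pot G fi = None -> maximal_pi G (Cset G fi) (Cl fi)) ->
  (forall fi, fg_pot G fi = None -> exists fj, fg_pot G fj <> None /\ poss_id G fi fj) ->
  (forall x y, fg_pot G x = None -> fg_pot G y = None -> indist G x y -> col1 x = col1 y) ->
  forall s st done, (forall f, f \in s -> fg_pot G f = None) -> uniq (done ++ s) ->
  inv4 G Cl col1 st done -> inv4 G Cl col1 (foldl (step4 G 0 Cl) st s) (done ++ s).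
Proof.
move=> Hcl Hex Hc1; elim => [|fk s IH] st done Hu Hq Hinv /=.
  by rewrite cats0.
rewrite -cat_rcons; apply: IH; first by move=> f fs; apply: Hu; rewrite inE fs orbT.
  by rewrite cat_rcons.
have hk : fg_pot G fk = None by apply: Hu; rewrite inE eqxx.
have [c0 [h0 h0C]] := Cl_ne hk (Hcl fk hk) (Hex fk hk).
have fkd : fk \notin done.
  by move: Hq; rewrite cat_uniq => /and3P [_ /hasPn H _]; apply: H; rewrite inE eqxx.
case: st Hinv => col np; rewrite /inv4 /= => -[I1 I2 I3 I4].
have -> : (0 < #|Cset G fk|)%N && (0 <= (#|Cl fk|)%:R / (#|Cset G fk|)%:R :> R).
  by rewrite c0 divr_ge0 ?ler0n.
split => /=.
- move=> x hx; case: ifP => [xC|_]; last exact: I1.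
  by have [] := Cl_prop (Hcl fk hk) xC; rewrite hx.
- move=> p h; rewrite mem_rcons inE => /orP [/eqP ->|pd] hC.
    by rewrite hC I1.
  case: ifP => [hk'|_]; last exact: I2.
  rewrite I1 //; apply: Hc1 => //; first exact: I4.
  have [_ E1] := Cl_prop (Hcl fk hk) hk'.
  have [_ E2] := Cl_prop (Hcl p (I4 p pd)) hC.
  exact: indist_trans E1 (indist_sym E2).
- move=> p; rewrite mem_rcons inE => /orP [/eqP ->|pd].
    rewrite eqxx; case: pickP => [h hC|/(_ h0)]; last by rewrite h0C.
    by exists h.
  have -> : (p == fk) = false by apply/eqP => E; move: fkd; rewrite -E pd.
  exact: I3.
- by move=> p; rewrite mem_rcons inE => /orP [/eqP ->|/I4].
Qed.

Theorem mainTheorem1 (R : realType) (V F : finType) (G : factor_graph R V F) :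
  (* potentials of known factors are positive *)
  (forall f phi, fg_pot G f = Some phi -> forall a, valid_assign G f a -> 0 < phi a) ->
  (* every unknown factor is possibly identical to some known factor *)
  (forall fi, fg_pot G fi = None ->
     exists fj, fg_pot G fj <> None /\ poss_id G fi fj) ->
  exists theta : R, 0 <= theta <= 1 /\
    forall (col0 : F -> nat) (s : seq F) (Cl : F -> {set F}),
      init_colouring G col0 ->
      uniq s -> (forall f, (f \in s) = unknownb G f) ->
      (forall fi, fg_pot G fi = None -> maximal_pi G (Cset G fi) (Cl fi)) ->
      forall fi, fg_pot G fi = None ->
        exists fj, fg_pot G fj <> None /\
          (LIFG G theta col0 s Cl).1 fi = (LIFG G theta col0 s Cl).1 fj /\
          (LIFG G theta col0 s Cl).2 fi = fg_pot G fj.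
Proof.
move=> _ Hex; exists 0; split; first by rewrite lexx ler01.
move=> col0 s Cl _ us Hs Hcl fi hi.
have Hu f : f \in s -> fg_pot G f = None.
  by rewrite Hs unknownbE => /eqP.
have fis : fi \in s by rewrite Hs unknownbE hi.
set col1 := foldl (step3 G) col0 s.
have Hc1 x y : fg_pot G x = None -> fg_pot G y = None -> indist G x y -> col1 x = col1 y.
  move=> hx hy E; symmetry; apply: (@step3_fold _ _ _ G s col0 [::]) => //.
  by rewrite /= Hs unknownbE hx.
have := @step4_fold _ _ _ G Cl col1 Hcl Hex Hc1 s (col1, fg_pot G) [::] Hu us.
case=> //.
rewrite /= /LIFG -/col1 => I1 I2 I3 _.
have [h hC E] := I3 fi fis.
exists h; split; first by have [] := Cl_prop (Hcl fi hi) hC.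
by rewrite E (I2 fi h fis hC) I1.
Qed.
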